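(* Let $H$ be an $n\times n$ Hermitian matrix and let $M=H+aJ$, where $a$ is a real number and $J$ is the $n\times n$ all-ones matrix. Let $\tau_1<\tau_2<\cdots<\tau_r$ be the distinct main eigenvalues of $H$, let $\beta_i$ be the main angle of $\tau_i$ (as an eigenvalue of $H$), and let $\mu_1<\mu_2<\cdots<\mu_s$ be the distinct main eigenvalues of $M$. Then $r=s$, and \[ \prod_{i=1}^r(\mu_i-x)=\prod_{i=1}^r(\tau_i-x)\Big(1+a\sum_{j=1}^r\frac{n\beta_j^2}{\tau_j-x}\Big). \] Moreover, if $a>0$ then $\tau_1<\mu_1<\tau_2<\mu_2<\cdots<\tau_r<\mu_r$, and if $a<0$ then $\mu_1<\tau_1<\mu_2<\tau_2<\cdots<\mu_r<\tau_r$.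
   Context: For an $n\times n$ Hermitian matrix $H$ with distinct eigenvalues $\theta_1<\cdots<\theta_t$, let $E_i$ be the orthogonal projection onto the eigenspace of $\theta_i$ and let $j$ be the all-ones column vector of length $n$. The main angle of $\theta_i$ is $\beta_i=\frac{1}{\sqrt n}\sqrt{(E_ij)^*(E_ij)}$, where $^*$ denotes conjugate transpose. The eigenvalue $\theta_i$ is called main if $\beta_i\neq 0$. *)

(* Defs.v *)
From HB Require Import structures.
From mathcomp Require Import all_boot all_order all_algebra all_field.
Set Implicit Arguments. Unset Strict Implicit. Unset Printing Implicit Defensive.
Import Order.TTheory GRing.Theory Num.Theory.
From mathcomp Require Import algC.
Local Open Scope ring_scope.

Definition ctr (m n : nat) (A : 'M[algC]_(m, n)) : 'M[algC]_(n, m) :=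
  (map_mx Num.conj_op A)^T.

Definition herm_mx (n : nat) (H : 'M[algC]_n) : bool := ctr H == H.

Definition Jmx (n : nat) : 'M[algC]_n := const_mx 1.
Definition jvec (n : nat) : 'cV[algC]_n := const_mx 1.

(* A matrix X whose columns form a basis of the (column) eigenspace
   { x : H x = th x } (rows of X^T are a basis of the row kernel of (H - th)^T). *)
Definition eigbasis (n : nat) (H : 'M[algC]_n) (th : algC) :=
  (row_base (kermx ((H - th%:M)^T)))^T.

(* Orthogonal projection onto the eigenspace of th:  E = X (X^* X)^{-1} X^*.
   (If th is not an eigenvalue, X has no columns and E = 0.) *)
Definition eigproj (n : nat) (H : 'M[algC]_n) (th : algC) : 'M[algC]_n :=
  let X := eigbasis H th in X *m invmx (ctr X *m X) *m ctr X.

Definition main_angle (n : nat) (H : 'M[algC]_n) (th : algC) : algC :=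
  let v := eigproj H th *m jvec n in
  sqrtC ((ctr v *m v) ord0 ord0) / sqrtC n%:R.

Definition main_eig (n : nat) (H : 'M[algC]_n) (th : algC) : bool :=
  eigenvalue H th && (main_angle H th != 0).

(* Main.v *)
Require Import Defs.
From HB Require Import structures.
From mathcomp Require Import all_boot all_order all_algebra all_field.
From mathcomp Require Import sesquilinear spectral ring zify.
Import Order.TTheory GRing.Theory Num.Theory.
From mathcomp Require Import algC.
Local Open Scope ring_scope.
Set Implicit Arguments. Unset Strict Implicit. Unset Printing Implicit Defensive.

Lemma cnorm (x : algC) : x^* * x = `|x| ^+ 2.
Proof. by rewrite mulrC normCK. Qed.

Section Ctr.
Implicit Types (m n p : nat).

Lemma ctrK m n (A : 'M[algC]_(m, n)) : ctr (ctr A) = A.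
Proof. by apply/matrixP => i j; rewrite !mxE conjCK. Qed.

Lemma ctrM m n p (A : 'M[algC]_(m, n)) (B : 'M[algC]_(n, p)) :
  ctr (A *m B) = ctr B *m ctr A.
Proof.
apply/matrixP => i j; rewrite !mxE rmorph_sum; apply: eq_bigr => k _.
by rewrite !mxE rmorphM mulrC.
Qed.

Lemma ctrD m n (A B : 'M[algC]_(m, n)) : ctr (A + B) = ctr A + ctr B.
Proof. by apply/matrixP => i j; rewrite !mxE rmorphD. Qed.

Lemma ctrN m n (A : 'M[algC]_(m, n)) : ctr (- A) = - ctr A.
Proof. by apply/matrixP => i j; rewrite !mxE rmorphN. Qed.

Lemma ctrB m n (A B : 'M[algC]_(m, n)) : ctr (A - B) = ctr A - ctr B.
Proof. by rewrite ctrD ctrN. Qed.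

Lemma ctrZ m n (a : algC) (A : 'M[algC]_(m, n)) : ctr (a *: A) = a^* *: ctr A.
Proof. by apply/matrixP => i j; rewrite !mxE rmorphM. Qed.

Lemma ctr0 m n : ctr (0 : 'M[algC]_(m, n)) = 0.
Proof. by apply/matrixP => i j; rewrite !mxE rmorph0. Qed.

Lemma ctr_sum m n (I : finType) (F : I -> 'M[algC]_(m, n)) :
  ctr (\sum_i F i) = \sum_i ctr (F i).
Proof. by apply: (big_morph _ (@ctrD m n) (@ctr0 m n)). Qed.

Lemma ctr_scalar n (a : algC) : ctr (a%:M : 'M_n) = a^*%:M.
Proof.
apply/matrixP => i j; rewrite !mxE eq_sym.
by case: (i == j); rewrite ?mulr1n ?mulr0n ?rmorph0.
Qed.

Lemma ctr_inv n (A : 'M[algC]_n) : ctr (invmx A) = invmx (ctr A).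
Proof. by rewrite /ctr (map_invmx Num.conj_op) trmx_inv. Qed.

Lemma ctr_mul_eq0 m n (Z : 'M[algC]_(m, n)) : ctr Z *m Z = 0 -> Z = 0.
Proof.
move=> h; apply/matrixP => i j; rewrite mxE.
have /matrixP /(_ j j) := h; rewrite !mxE => /eqP.
rewrite psumr_eq0 => [/allP /(_ i) |k _]; last first.
  by rewrite !mxE cnorm exprn_ge0.
rewrite mem_index_enum => /(_ isT) /implyP /(_ isT).
by rewrite !mxE cnorm sqrf_eq0 normr_eq0 => /eqP.
Qed.

Lemma dot_ge0 m (v : 'cV[algC]_m) : 0 <= (ctr v *m v) 0 0.
Proof. by rewrite !mxE sumr_ge0 // => k _; rewrite !mxE cnorm exprn_ge0. Qed.

End Ctr.

Section Eig.
Variables (n : nat) (A : 'M[algC]_n) (th : algC).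
Local Notation K := (kermx ((A - th%:M)^T)).
Local Notation B := (row_base K).
Local Notation X := (eigbasis A th).
Local Notation k := (\rank K).

Lemma eigbasisP : A *m X = th *: X.
Proof.
have hB : B *m (A - th%:M)^T = 0.
  by apply/sub_kermxP; rewrite eq_row_base.
have := congr1 trmx hB; rewrite trmx_mul trmxK trmx0 mulmxBl mul_scalar_mx.
by move/eqP; rewrite subr_eq0 => /eqP.
Qed.

Lemma eigbasis_inj p (y : 'M[algC]_(k, p)) : X *m y = 0 -> y = 0.
Proof.
move=> h; have : y^T *m B = 0 by rewrite -[B]trmxK -trmx_mul h trmx0.
move/eqP; rewrite mulmx_free_eq0 ?row_base_free // => /eqP h2.
by rewrite -[y]trmxK h2 trmx0.
Qed.

Lemma eigbasis_span (v : 'cV[algC]_n) : A *m v = th *: v ->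
  v = X *m (v^T *m pinvmx B)^T.
Proof.
move=> h; have h1 : (v^T <= B)%MS.
  rewrite eq_row_base; apply/sub_kermxP.
  by rewrite -trmx_mul mulmxBl h mul_scalar_mx subrr trmx0.
by rewrite /eigbasis -trmx_mul mulmxKpV // trmxK.
Qed.

Lemma gram_unit : ctr X *m X \in unitmx.
Proof.
rewrite -row_free_unit -kermx_eq0; apply/eqP/row_matrixP => i.
set u := row i _.
have hu : u *m (ctr X *m X) = 0 by rewrite /u -row_mul mulmx_ker row0.
have h2 : ctr (X *m ctr u) *m (X *m ctr u) = 0.
  by rewrite ctrM ctrK mulmxA -(mulmxA u) hu mul0mx.
have := ctr_mul_eq0 h2 => /eigbasis_inj h3.
by rewrite row0 -[u]ctrK h3 ctr0.
Qed.

Lemma eigprojE : eigproj A th = X *m invmx (ctr X *m X) *m ctr X.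
Proof. by []. Qed.

Lemma eigproj_ctr : ctr (eigproj A th) = eigproj A th.
Proof. by rewrite eigprojE !ctrM ctrK ctr_inv ctrM ctrK mulmxA. Qed.

Lemma eigprojX : eigproj A th *m X = X.
Proof.
by rewrite eigprojE -!mulmxA (mulVmx (gram_unit)) mulmx1.
Qed.

Lemma eigproj_fix (v : 'cV[algC]_n) : A *m v = th *: v -> eigproj A th *m v = v.
Proof. by move=> /eigbasis_span ->; rewrite mulmxA eigprojX. Qed.

Lemma eigproj_idem : eigproj A th *m eigproj A th = eigproj A th.
Proof. by rewrite {2}eigprojE !mulmxA eigprojX -eigprojE. Qed.

Lemma eigprojA : A *m eigproj A th = th *: eigproj A th.
Proof. by rewrite eigprojE !mulmxA eigbasisP -!scalemxAl. Qed.

Lemma eigproj_orth (v : 'cV[algC]_n) : ctr X *m v = 0 -> eigproj A th *m v = 0.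
Proof. by move=> h; rewrite eigprojE -[_ *m v]mulmxA h mulmx0. Qed.

End Eig.

Section Main.
Variables (n : nat) (A : 'M[algC]_n) (th : algC).
Local Notation P := (eigproj A th).
Local Notation j := (jvec n).
Local Notation w := (eigproj A th *m jvec n).

Lemma mx11_eq0 (Z : 'M[algC]_1) : (Z == 0) = (Z 0 0 == 0).
Proof.
apply/eqP/eqP => [-> | h]; first by rewrite mxE.
by apply/matrixP => i k; rewrite !ord1 h mxE.
Qed.

Lemma cw_eq0 m (v : 'cV[algC]_m) : ((ctr v *m v) 0 0 == 0) = (v == 0).
Proof.
rewrite -mx11_eq0; apply/eqP/eqP => [/ctr_mul_eq0 // | ->].
by rewrite mulmx0.
Qed.

Lemma main_angle2 : n%:R * main_angle A th ^+ 2 = (ctr w *m w) 0 0.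
Proof.
rewrite /main_angle; case: n A => [|n'] A' /=.
  by rewrite mul0r; rewrite !mxE big_ord0.
by rewrite expr_div_n !sqrtCK mulrC divfK // pnatr_eq0.
Qed.

Lemma main_eigE : main_eig A th = (w != 0).
Proof.
rewrite /main_eig; case: (eqVneq w 0) => [w0 | wn0] /=.
  by rewrite /main_angle w0 mulmx0 mxE sqrtC0 mul0r eqxx andbF.
have nn0 : n != 0%N.
  move: wn0; apply: contra_neq => n0; apply/matrixP => -[i hi] ?.
  by exfalso; move: hi; rewrite n0.
apply/andP; split.
  rewrite /eigenvalue /eigenspace kermx_eq0 row_free_unit; apply/negP => hu.
  have hw : (A - th%:M) *m w = 0.
    by rewrite mulmxBl mul_scalar_mx mulmxA eigprojA -scalemxAl subrr.
  by move: wn0; rewrite -(mulKmx hu w) hw mulmx0 eqxx.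
rewrite /main_angle mulf_eq0 negb_or sqrtC_eq0 invr_eq0 sqrtC_eq0 pnatr_eq0.
by rewrite nn0 cw_eq0 wn0.
Qed.

Lemma ctrjP : ctr j *m P = ctr w.
Proof. by rewrite ctrM eigproj_ctr. Qed.

Lemma main_eigP : reflect (exists v : 'cV_n, A *m v = th *: v /\ ctr j *m v != 0)
  (main_eig A th).
Proof.
rewrite main_eigE; apply: (iffP idP) => [wn0 | [v [hv hj]]].
  exists w; split; first by rewrite mulmxA eigprojA scalemxAl.
  by rewrite -{1}eigproj_idem -mulmxA mulmxA ctrjP mx11_eq0 cw_eq0.
apply: contraNneq hj => w0.
by rewrite -(eigproj_fix hv) mulmxA ctrjP w0 ctr0 mul0mx.
Qed.

End Main.

Section Herm.
Variables (n : nat) (A : 'M[algC]_n).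
Hypothesis hA : ctr A = A.

Lemma herm_eig_real (th : algC) (v : 'cV[algC]_n) :
  A *m v = th *: v -> v != 0 -> th \is Num.real.
Proof.
move=> hv vn0.
have e1 : ctr v *m (A *m v) = th *: (ctr v *m v) by rewrite hv scalemxAr.
have e2 : ctr v *m (A *m v) = th^* *: (ctr v *m v).
  by rewrite mulmxA -{1}hA -ctrM hv ctrZ scalemxAl.
have /eqP := etrans (esym e1) e2; rewrite -subr_eq0 -scalerBl scaler_eq0 subr_eq0.
rewrite mx11_eq0 cw_eq0 (negbTE vn0) orbF CrealE eq_sym.
by [].
Qed.

Lemma eigprojAr (th : algC) : th \is Num.real ->
  eigproj A th *m A = th *: eigproj A th.
Proof.
move=> thr; rewrite -[_ *m A]ctrK ctrM hA eigproj_ctr eigprojA ctrZ eigproj_ctr.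
by move: thr; rewrite CrealE => /eqP ->.
Qed.

Lemma eigproj_other (th th' : algC) (v : 'cV[algC]_n) : th' \is Num.real ->
  A *m v = th' *: v -> th != th' -> eigproj A th *m v = 0.
Proof.
move=> thr hv ne; apply: eigproj_orth.
have e1 : ctr (eigbasis A th) *m (A *m v) = th' *: (ctr (eigbasis A th) *m v).
  by rewrite hv scalemxAr.
have e2 : ctr (eigbasis A th) *m (A *m v) = th^* *: (ctr (eigbasis A th) *m v).
  have hX : ctr (A *m eigbasis A th) = ctr (eigbasis A th) *m A by rewrite ctrM hA.
  by rewrite mulmxA -hX eigbasisP ctrZ scalemxAl.
have /eqP := etrans (esym e1) e2; rewrite -subr_eq0 -scalerBl scaler_eq0 subr_eq0.
case/orP => [/eqP h | /eqP //].
move: thr; rewrite CrealE => /eqP thc.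
by move: ne; rewrite -thc h conjCK eqxx.
Qed.

End Herm.

Section Spec.
Variables (n : nat) (H : 'M[algC]_n).
Hypothesis hH : ctr H = H.

Let U := spectralmx H.
Let d := spectral_diag H.

Lemma hermsym : H \is hermsymmx.
Proof.
apply/is_hermitianmxP; rewrite expr0 scale1r.
by rewrite -{1}hH /ctr map_trmx.
Qed.

Lemma UctrU : U *m ctr U = 1%:M.
Proof.
have /unitarymxP := spectral_unitarymx H.
by rewrite -map_trmx.
Qed.

Lemma ctrUU : ctr U *m U = 1%:M.
Proof. exact: mulmx1C UctrU. Qed.

Lemma H_spec : H = ctr U *m diag_mx d *m U.
Proof.
have /orthomx_spectralP h := hermitian_normalmx hermsym.
rewrite {1}h invmx_unitary ?spectral_unitarymx //.
by rewrite /ctr map_trmx.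
Qed.

Lemma d_real k : d 0 k \is Num.real.
Proof. by have /mxOverP := hermitian_spectral_diag_real hermsym; apply. Qed.

Lemma H_col k : H *m col k (ctr U) = d 0 k *: col k (ctr U).
Proof.
have e : H *m ctr U = ctr U *m diag_mx d.
  by rewrite H_spec -!mulmxA UctrU mulmx1.
rewrite !colE mulmxA e -mulmxA scalemxAr; congr (_ *m _).
rewrite mul_diag_mx; apply/matrixP => i z; rewrite !mxE.
by case: (eqVneq k i) => [-> | ne]; rewrite ?mulr0 //= andbF mulr0n mulr0.
Qed.

Lemma j_decomp (v : 'cV[algC]_n) :
  v = \sum_k ((U *m v) k 0) *: col k (ctr U).
Proof.
rewrite -{1}[v]mul1mx -ctrUU -mulmxA.
apply/matrixP => i z; rewrite summxE !mxE; apply: eq_bigr => k _.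
by rewrite !mxE mulrC (ord1 z).
Qed.

Lemma b_ctr (v : 'cV[algC]_n) k :
  (U *m v) k 0 = (ctr (col k (ctr U)) *m v) 0 0.
Proof.
by rewrite !mxE; apply: eq_bigr => z _; rewrite !mxE conjCK.
Qed.

Lemma spectral_j (tau : seq algC) : uniq tau ->
  (forall x, (x \in tau) = main_eig H x) ->
  jvec n = \sum_(i < size tau) eigproj H tau`_i *m jvec n.
Proof.
move=> utau htau.
have e1 (i : nat) : eigproj H tau`_i *m jvec n =
    \sum_k ((U *m jvec n) k 0) *: (eigproj H tau`_i *m col k (ctr U)).
  rewrite {1}(j_decomp (jvec n)) mulmx_sumr; apply: eq_bigr => k _.
  by rewrite scalemxAr.
under eq_bigr do rewrite e1; rewrite exchange_big /=.
rewrite {1}(j_decomp (jvec n)); apply: eq_bigr => k _.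
rewrite -scaler_sumr.
have [dk | dkn] := boolP (d 0 k \in tau).
  congr (_ *: _).
  pose i0 : 'I_(size tau) := Ordinal (etrans (index_mem (d 0 k) tau) dk).
  rewrite (bigD1 i0) //= nth_index // eigproj_fix ?H_col // big1 ?addr0 //.
  move=> i ne; apply: (eigproj_other hH (d_real k)) => //.
    exact: H_col.
  apply: contra ne => /eqP e; apply/eqP/val_inj => /=.
  by rewrite -e index_uniq.
have hb : (U *m jvec n) k 0 = 0.
  have := dkn; rewrite htau main_eigE negbK => /eqP w0.
  rewrite b_ctr -(eigproj_fix (H_col k)) ctrM eigproj_ctr -mulmxA w0 mulmx0.
  by rewrite mxE.
by rewrite hb !scale0r.
Qed.

End Spec.

Section MuChar.
Variables (n : nat) (H : 'M[algC]_n) (a : algC) (tau : seq algC).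
Hypotheses (hH : ctr H = H) (a0 : a != 0) (utau : uniq tau)
  (htau : forall x, (x \in tau) = main_eig H x).
Local Notation j := (jvec n).
Let w (i : nat) := eigproj H tau`_i *m j.
Let c (i : nat) := (ctr (w i) *m w i) 0 0.

Lemma Jmx_E : Jmx n = j *m ctr j.
Proof.
apply/matrixP => i k; rewrite !mxE big_ord1 !mxE.
by rewrite rmorph1 mulr1.
Qed.

Lemma mx11E (Z : 'M[algC]_1) : Z = (Z 0 0)%:M.
Proof. exact: mx11_scalar. Qed.

Lemma M_apply (v : 'cV_n) :
  (H + a *: Jmx n) *m v = H *m v + (a * (ctr j *m v) 0 0) *: j.
Proof.
rewrite mulmxDl -scalemxAl Jmx_E -mulmxA [ctr j *m v]mx11E mul_mx_scalar.
by rewrite scalerA [_%:M 0 0]mxE mulr1n.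
Qed.

Lemma w_facts (i : nat) : (i < size tau)%N ->
  [/\ w i != 0, H *m w i = tau`_i *: w i & tau`_i \is Num.real].
Proof.
move=> hi; have hm : main_eig H tau`_i by rewrite -htau mem_nth.
have wn0 : w i != 0 by rewrite /w -main_eigE.
have hw : H *m w i = tau`_i *: w i by rewrite /w mulmxA eigprojA scalemxAl.
by split => //; apply: herm_eig_real hw wn0.
Qed.

Lemma ctrj_w (i : nat) : ctr j *m w i = (c i)%:M.
Proof.
have e : ctr j *m (eigproj H tau`_i *m j) =
    ctr (eigproj H tau`_i *m j) *m (eigproj H tau`_i *m j).
  by rewrite -ctrjP -mulmxA (mulmxA (eigproj _ _)) eigproj_idem.
by rewrite [LHS]mx11E /c /w e.
Qed.

Lemma j_sum : j = \sum_(i < size tau) w i.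
Proof. exact: spectral_j. Qed.

Lemma ctrj_sum : ctr j = \sum_(i < size tau) ctr (w i).
Proof. by rewrite {1}j_sum ctr_sum. Qed.

Lemma mu_char x : main_eig (H + a *: Jmx n) x =
  (x \notin tau) && (1 + a * \sum_(i < size tau) c i / (tau`_i - x) == 0).
Proof.
apply/main_eigP/andP => [[v [hv hs]] | [xn /eqP hf]].
  set s := (ctr j *m v) 0 0.
  have sn0 : s != 0 by rewrite -mx11_eq0.
  have hHv : H *m v = x *: v - (a * s) *: j.
    by rewrite -hv M_apply addrK.
  have hP (i : nat) : (i < size tau)%N ->
      (tau`_i - x) *: (eigproj H tau`_i *m v) = - (a * s) *: w i.
    move=> hi; have [_ _ tr] := w_facts hi.
    have := congr1 (mulmx (eigproj H tau`_i)) hHv.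
    rewrite mulmxA (eigprojAr hH tr) -scalemxAl mulmxBr -!scalemxAr => e.
    by rewrite scalerBl e addrAC subrr add0r scaleNr.
  have xn : x \notin tau.
    apply/negP => xt; pose i := index x tau.
    have hi : (i < size tau)%N by rewrite index_mem.
    have := hP i hi; rewrite nth_index // subrr scale0r => /esym/eqP.
    rewrite scaler_eq0 oppr_eq0 !mulf_eq0 (negbTE a0) (negbTE sn0) /=.
    by have [/negbTE -> _ _] := w_facts hi.
  split => //; apply/eqP.
  have hPv (i : nat) : (i < size tau)%N ->
      eigproj H tau`_i *m v = (- (a * s) / (tau`_i - x)) *: w i.
    move=> hi; have ne : tau`_i - x != 0.
      by rewrite subr_eq0; apply: contraNneq xn => <-; rewrite mem_nth.
    by rewrite mulrC -scalerA -(hP i hi) scalerA mulVf // scale1r.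
  have es : s = \sum_(i < size tau) (- (a * s) / (tau`_i - x)) * c i.
    rewrite [in LHS]/s ctrj_sum mulmx_suml summxE; apply: eq_bigr => i _.
    rewrite /w ctrM eigproj_ctr -mulmxA (hPv i (ltn_ord i)) -scalemxAr.
    by rewrite -/(w i) ctrj_w !mxE eqxx mulr1n.
  have : s * (1 + a * \sum_(i < size tau) c i / (tau`_i - x)) = 0.
    rewrite mulrDr mulr1 {1}es mulr_sumr mulr_sumr -big_split /=.
    apply: big1 => i _; rewrite mulrA.
    ring.
  by move/eqP; rewrite mulf_eq0 (negbTE sn0) /= => /eqP.
pose v := \sum_(i < size tau) (tau`_i - x)^-1 *: w i.
have ne (i : 'I_(size tau)) : tau`_i - x != 0.
  by rewrite subr_eq0; apply: contraNneq xn => <-; rewrite mem_nth.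
set S := \sum_(i < size tau) _ in hf.
have hs : (ctr j *m v) 0 0 = S.
  rewrite /v mulmx_sumr summxE; apply: eq_bigr => i _.
  by rewrite -scalemxAr ctrj_w !mxE eqxx mulr1n mulrC.
exists v; split; last first.
  rewrite mx11_eq0 hs; apply/eqP => S0.
  by move: hf; rewrite S0 mulr0 addr0 => /eqP; rewrite oner_eq0.
rewrite M_apply hs.
have -> : H *m v = x *: v + j.
  rewrite j_sum /v mulmx_sumr scaler_sumr -big_split /=; apply: eq_bigr => i _.
  have [_ hw _] := w_facts (ltn_ord i).
  rewrite -scalemxAr hw scalerA scalerA -{3}[w i]scale1r -scalerDl.
  congr (_ *: _); rewrite -(divff (ne i)) mulrC -mulrDl; congr (_ / _).
  by rewrite addrC subrK.
by rewrite -addrA -{1}[j]scale1r -scalerDl hf scale0r addr0.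
Qed.

End MuChar.
Lemma real_cases (y z : algC) : y \is Num.real -> z \is Num.real ->
  (z <= y) || (y < z).
Proof. by move=> yr zr; rewrite real_leNgt // orNb. Qed.


Lemma between (s : seq algC) (y1 y2 : algC) :
  y1 \is Num.real -> y2 \is Num.real -> {in s, forall z, z \is Num.real} ->
  y1 < y2 -> (\prod_(z <- s) (y1 - z)) * (\prod_(z <- s) (y2 - z)) < 0 ->
  exists2 z, z \in s & y1 < z < y2.
Proof.
move=> y1r y2r sr y12 hlt.
case: (boolP (has (fun z => y1 < z < y2) s)) => [/hasP [z zs hz] | hn].
  by exists z.
move: hlt; rewrite -big_split /= big_seq le_gtF //.
apply: prodr_ge0 => z zs.
have zr := sr z zs.
have hnz : ~~ (y1 < z < y2) by apply: contra hn => h; apply/hasP; exists z.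
case/orP: (real_cases y1r zr) => h1.
  by apply: mulr_ge0; rewrite subr_ge0 // (le_trans h1 (ltW y12)).
have h2 : y2 <= z by rewrite real_leNgt //; apply: contra hnz => h2; rewrite h1 h2.
by apply: mulr_le0; rewrite subr_le0 // ltW // (lt_le_trans y12 h2).
Qed.

Lemma above (s : seq algC) (y : algC) :
  y \is Num.real -> {in s, forall z, z \is Num.real} ->
  \prod_(z <- s) (y - z) < 0 -> exists2 z, z \in s & y < z.
Proof.
move=> yr sr hlt.
case: (boolP (has (fun z => y < z) s)) => [/hasP [z zs hz] | hn].
  by exists z.
move: hlt; rewrite big_seq le_gtF //; apply: prodr_ge0 => z zs.
have hnz : ~~ (y < z) by apply: contra hn => h; apply/hasP; exists z.
by rewrite subr_ge0 real_leNgt // sr.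
Qed.

Lemma below (s : seq algC) (y : algC) :
  y \is Num.real -> {in s, forall z, z \is Num.real} ->
  \prod_(z <- s) (z - y) < 0 -> exists2 z, z \in s & z < y.
Proof.
move=> yr sr hlt.
case: (boolP (has (fun z => z < y) s)) => [/hasP [z zs hz] | hn].
  by exists z.
move: hlt; rewrite big_seq le_gtF //; apply: prodr_ge0 => z zs.
have hnz : ~~ (z < y) by apply: contra hn => h; apply/hasP; exists z.
by rewrite subr_ge0 real_leNgt // sr.
Qed.

Lemma seq_from_witness (mu : seq algC) (r : nat) (P : nat -> algC -> bool) :
  sorted <%R mu -> (size mu <= r)%N ->
  (forall k, (k < r)%N -> exists z, (z \in mu) && P k z) ->
  (forall k z z', (k.+1 < r)%N -> P k z -> P k.+1 z' -> z < z') ->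
  size mu = r /\ (forall k, (k < r)%N -> P k mu`_k).
Proof.
move=> smu szmu hw hch.
have ex k : exists z, (k < r)%N ==> ((z \in mu) && P k z).
  case: (ltnP k r) => hk; last by exists 0.
  by have [z hz] := hw k hk; exists z.
pose nu := mkseq (fun k => xchoose (ex k)) r.
have hnu k : (k < r)%N -> (nu`_k \in mu) && P k nu`_k.
  by move=> hk; rewrite nth_mkseq //; move: (xchooseP (ex k)) => /implyP; apply.
have snu : sorted <%R nu.
  apply/(sortedP 0) => k; rewrite size_mkseq => hk.
  have /andP[_ h1] := hnu k (ltnW hk).
  have /andP[_ h2] := hnu k.+1 hk.
  exact: hch h1 h2.
have sub : {subset nu <= mu}.
  move=> z /(nthP 0) [k]; rewrite size_mkseq => hk <-.
  by have /andP[] := hnu k hk.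
have [e1 e2] : ((size nu = size mu) * (nu =i mu))%type.
  by apply: uniq_min_size (lt_sorted_uniq snu) sub _; rewrite size_mkseq.
have numu : nu = mu by apply: lt_sorted_eq.
split; first by rewrite -numu size_mkseq.
move=> k hk; rewrite -numu.
by have /andP[] := hnu k hk.
Qed.

Section Poly.
Variables (tau : seq algC) (c : nat -> algC) (a : algC).
Local Notation r := (size tau).
Local Notation t i := (tau`_i).

Definition Qp := \prod_(z <- tau) ('X - z%:P).
Definition Rp := \sum_(k < r) c k *: \prod_(i < r | i != k) ('X - (t i)%:P).
Definition Gp := Qp - a *: Rp.

Lemma size_Rp : (size Rp <= r)%N.
Proof.
apply: leq_trans (size_sum _ _ _) _; apply/bigmax_leqP => k _.
apply: leq_trans (size_scale_leq _ _) _.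
rewrite size_prod; last by move=> i _; rewrite polyXsubC_eq0.
under eq_bigr do rewrite size_XsubC.
rewrite sum_nat_const.
have -> : #|(fun i : 'I_r => i != k)| = r.-1.
  by rewrite -[in RHS](card_ord r) -(cardC1 k); apply: eq_card => i.
have := ltn_ord k; case: (size tau) k => // m _ _ /=.
lia.
Qed.

Lemma Gp_monic : Gp \is monic.
Proof.
have hs : (size (- (a *: Rp)) < size Qp)%N.
  by rewrite size_opp size_prod_XsubC ltnS (leq_trans (size_scale_leq _ _) size_Rp).
by rewrite /Gp monicE lead_coefDl // -monicE monic_prod_XsubC.
Qed.

Lemma size_Gp : size Gp = r.+1.
Proof.
have hs : (size (- (a *: Rp)) < size Qp)%N.
  by rewrite size_opp size_prod_XsubC ltnS (leq_trans (size_scale_leq _ _) size_Rp).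
by rewrite /Gp size_addl // size_prod_XsubC.
Qed.

Lemma prod_ord (F : algC -> algC) : \prod_(z <- tau) F z = \prod_(i < r) F (t i).
Proof. by rewrite (big_nth 0) big_mkord. Qed.

Lemma horner_Gp x : Gp.[x] = \prod_(i < r) (x - t i)
   - a * \sum_(k < r) c k * \prod_(i < r | i != k) (x - t i).
Proof.
rewrite /Gp hornerD hornerN hornerZ /Qp horner_prod prod_ord horner_sum.
congr (_ - _ * _); last apply: eq_bigr => k _.
  by apply: eq_bigr => i _; rewrite hornerXsubC.
by rewrite hornerZ horner_prod; congr (_ * _); apply: eq_bigr => i _; rewrite hornerXsubC.
Qed.

Lemma Gp_out x : x \notin tau ->
  Gp.[x] = \prod_(i < r) (x - t i) * (1 + a * \sum_(k < r) c k / (t k - x)).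
Proof.
move=> xn; rewrite horner_Gp.
have e (k : 'I_r) : c k * \prod_(i < r | i != k) (x - t i) =
    - \prod_(i < r) (x - t i) * (c k / (t k - x)).
  have ne : t k - x != 0.
    by rewrite subr_eq0; apply: contraNneq xn => <-; rewrite mem_nth.
  rewrite [in RHS](bigD1 k) //=.
  by field.
rewrite (eq_bigr _ (fun k _ => e k)).
rewrite -mulr_sumr; ring.
Qed.

Lemma Gp_at (k : 'I_r) : uniq tau ->
  Gp.[t k] = - a * c k * \prod_(i < r | i != k) (t k - t i).
Proof.
move=> ut; rewrite horner_Gp.
have -> : \prod_(i < r) (t k - t i) = 0.
  by rewrite (bigD1 k) //= subrr mul0r.
rewrite sub0r [\sum_(i < r) _](bigD1 k) //= [\sum_(i < r | _) _]big1 ?addr0 ?mulrA ?mulNr //.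
move=> i ne; rewrite (bigD1 k) //=; last by rewrite eq_sym.
by rewrite subrr mul0r mulr0.
Qed.

End Poly.

Section Signs.
Variables (tau : seq algC).
Hypotheses (st : sorted <%R tau) (treal : forall i, (i < size tau)%N -> tau`_i \is Num.real).
Local Notation r := (size tau).
Local Notation t i := (tau`_i).

Lemma tlt (i j : nat) : (i < r)%N -> (j < r)%N -> (i < j)%N -> t i < t j.
Proof. by move=> hi hj hij; rewrite (lt_sorted_ltn_nth 0 st). Qed.

Definition Dp (k : 'I_r) := \prod_(i < r | i != k) (t k - t i).

Lemma Dp_last (k : 'I_r) : k.+1 = r -> 0 < Dp k.
Proof.
move=> hk; apply: prodr_gt0 => i ne; rewrite subr_gt0; apply: tlt => //.
have : (i < k.+1)%N by rewrite hk.
rewrite ltnS leq_eqVlt => /orP[/eqP e | //].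
by move: ne; rewrite -val_eqE /= e eqxx.
Qed.

Lemma Dp_first (k : 'I_r) : k = 0 :> nat -> (-1) ^+ r * Dp k < 0.
Proof.
move=> hk; rewrite /Dp.
rewrite (eq_bigr (fun i : 'I_r => - (t i - t k))); last by move=> i _; rewrite opprB.
rewrite prodrN.
have -> : #|(fun i : 'I_r => i != k)| = r.-1.
  by rewrite -[in RHS](card_ord r) -(cardC1 k); apply: eq_card => i.
have hr : (0 < r)%N by rewrite (leq_ltn_trans _ (ltn_ord k)).
rewrite mulrA -exprD (_ : (r + r.-1 = (r.-1).*2.+1)%N); last first.
  by case: (size tau) hr => // m _; rewrite /= -addnn addSn.
rewrite exprS -muln2 exprM sqrr_sign mulr1 mulN1r oppr_lt0.
apply: prodr_gt0 => i ne; rewrite subr_gt0 tlt //.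
rewrite hk lt0n; apply: contra ne => /eqP e; apply/eqP/val_inj.
by rewrite /= e hk.
Qed.

Lemma Dp_next (k k' : 'I_r) : k'= k.+1 :> nat -> Dp k * Dp k' < 0.
Proof.
move=> hk.
have kk' : k != k' by rewrite -val_eqE /= hk neq_ltn ltnSn.
have lkk' : t k < t k' by apply: tlt => //; rewrite hk.
rewrite /Dp (bigD1 k') //=; last by rewrite eq_sym.
rewrite [X in _ * X](bigD1 k) //=.
have ep : (fun i : 'I_r => (i != k') && (i != k)) =1 (fun i => (i != k) && (i != k')).
  by move=> i; rewrite andbC.
rewrite (eq_bigl _ _ ep) mulrACA -big_split /=.
rewrite nmulr_rlt0; last first.
  by rewrite -opprB mulNr oppr_lt0 mulr_gt0 // subr_gt0.
apply: prodr_gt0 => i /andP[n1 n2].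
case: (ltngtP i k) => [lik | lki | eik].
- by rewrite mulr_gt0 // subr_gt0 tlt // ?hk // ltnS ltnW.
- have lk'i : (k' < i)%N.
    rewrite hk ltn_neqAle lki andbT; apply: contra n2 => /eqP e.
    by apply/eqP/val_inj; rewrite /= hk e.
  rewrite -[_ * _]opprK -mulNr -mulrN !opprB mulr_gt0 // subr_gt0 tlt //.
- by move: n1; rewrite -val_eqE /= eik eqxx.
Qed.

End Signs.

Lemma prod_flip (s : seq algC) (y : algC) :
  \prod_(z <- s) (z - y) = (-1) ^+ size s * \prod_(z <- s) (y - z).
Proof.
elim: s => [|z s IH]; first by rewrite !big_nil expr0 mulr1.
by rewrite !big_cons IH /= exprS -opprB; ring.
Qed.

Section Combi.
Variables (tau mu : seq algC) (c : nat -> algC) (a : algC).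
Hypotheses (ar : a \is Num.real) (a0 : a != 0) (st : sorted <%R tau)
  (treal : forall i, (i < size tau)%N -> tau`_i \is Num.real)
  (cpos : forall i, (i < size tau)%N -> 0 < c i)
  (smu : sorted <%R mu) (mureal : forall x, x \in mu -> x \is Num.real)
  (hmu : forall x, (x \in mu) =
     (x \notin tau) && (1 + a * \sum_(i < size tau) c i / (tau`_i - x) == 0)).
Local Notation r := (size tau).
Local Notation t i := (tau`_i).
Local Notation G := (Gp tau c a).

Let ut : uniq tau := lt_sorted_uniq st.
Let umu : uniq mu := lt_sorted_uniq smu.

Lemma Dp_neq0 (k : 'I_r) : @Dp tau k != 0.
Proof.
rewrite /Dp prodf_seq_neq0; apply/allP => i _; apply/implyP => ne.
rewrite subr_eq0; apply: contra ne => /eqP e; apply/eqP/val_inj.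
by apply/eqP; rewrite -(nth_uniq 0 (ltn_ord i) (ltn_ord k) ut) e.
Qed.

Lemma rootG x : root G x = (x \in mu).
Proof.
rewrite /root; case: (boolP (x \in tau)) => xt.
  have hk : (index x tau < r)%N by rewrite index_mem.
  pose k := Ordinal hk.
  have -> : x = t k by rewrite /= nth_index.
  rewrite Gp_at // hmu mem_nth //= !mulf_eq0 oppr_eq0 (negbTE a0) /=.
  by rewrite (negbTE (Dp_neq0 k)) orbF; apply/negbTE; rewrite gt_eqF ?cpos.
rewrite Gp_out // mulf_eq0 hmu xt /=.
have -> : (\prod_(i < r) (x - t i) == 0) = false.
  apply/negbTE; rewrite prodf_seq_neq0; apply/allP => i _; rewrite subr_eq0.
  by apply: contraNneq xt => ->; rewrite mem_nth.
by [].
Qed.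

Lemma size_mu_le : (size mu <= r)%N.
Proof.
have hd : \prod_(z <- mu) ('X - z%:P) %| G.
  by apply: uniq_roots_dvdp; [apply/allP => z; rewrite rootG | rewrite uniq_rootsE].
have := dvdp_leq _ hd; rewrite size_prod_XsubC size_Gp ltnS; apply.
by rewrite -size_poly_eq0 size_Gp.
Qed.

Lemma G_mu : size mu = r -> G = \prod_(z <- mu) ('X - z%:P).
Proof.
move=> hs.
have hd : \prod_(z <- mu) ('X - z%:P) %| G.
  by apply: uniq_roots_dvdp; [apply/allP => z; rewrite rootG | rewrite uniq_rootsE].
apply/esym/eqP; rewrite -eqp_monic ?monic_prod_XsubC ?Gp_monic //.
by rewrite -dvdp_size_eqp // size_prod_XsubC size_Gp hs.
Qed.

Lemma G_split : exists s : seq algC, size s = r /\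
  {subset s <= mu} /\ forall y, G.[y] = \prod_(z <- s) (y - z).
Proof.
have [s hs] := closed_field_poly_normal G.
move: hs; rewrite (monicP (Gp_monic tau c a)) scale1r => hs.
exists s; split.
  by have := size_Gp tau c a; rewrite hs size_prod_XsubC => -[].
split.
  by move=> z zs; rewrite -rootG hs root_prod_XsubC.
by move=> y; rewrite {1}hs horner_prod; apply: eq_bigr => z _; rewrite hornerXsubC.
Qed.

Lemma combi_main :
  [/\ size mu = r,
      (forall x, x \notin tau ->
         \prod_(i < r) (mu`_i - x) =
         \prod_(i < r) (t i - x) * (1 + a * \sum_(j < r) c j / (t j - x))),
      (0 < a -> forall i : nat, (i < r)%N ->
         t i < mu`_i /\ ((i.+1 < r)%N -> mu`_i < t i.+1)) &
      (a < 0 -> forall i : nat, (i < r)%N ->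
         mu`_i < t i /\ ((i.+1 < r)%N -> t i < mu`_i.+1))].
Proof.
have [s [hs [smu' hG]]] := G_split.
have sr : {in s, forall z, z \is Num.real} by move=> z /smu' /mureal.
have hGt (k : 'I_r) : G.[t k] = - a * c k * Dp k := Gp_at c a k ut.
have pos : 0 < a -> size mu = r /\ forall k, (k < r)%N ->
    (t k < mu`_k) && ((k.+1 < r)%N ==> (mu`_k < t k.+1)).
  move=> ap.
  apply: (seq_from_witness (P := fun k z => (t k < z) && ((k.+1 < r)%N ==> (z < t k.+1)))).
  - exact: smu.
  - exact: size_mu_le.
  - move=> k hk; case: (ltnP k.+1 r) => hk1.
      have hneg : (\prod_(z <- s) (t k - z)) * (\prod_(z <- s) (t k.+1 - z)) < 0.
        rewrite -!hG (hGt (Ordinal hk)) (hGt (Ordinal hk1)) /=.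
        have -> : - a * c k * Dp (Ordinal hk) * (- a * c k.+1 * Dp (Ordinal hk1)) =
            (a * a * c k * c k.+1) * (Dp (Ordinal hk) * Dp (Ordinal hk1)) by ring.
        rewrite pmulr_rlt0; first exact: Dp_next.
        by rewrite !mulr_gt0 ?cpos.
      have [z zs /andP[h1 h2]] :=
        between (treal hk) (treal hk1) sr (tlt st hk hk1 (ltnSn k)) hneg.
      by exists z; rewrite smu' // h1 /=.
    have hk1' : k.+1 = r by apply/eqP; rewrite eqn_leq hk hk1.
    have hneg : \prod_(z <- s) (t k - z) < 0.
      rewrite -hG (hGt (Ordinal hk)) /= mulNr mulNr oppr_lt0.
      by rewrite !mulr_gt0 ?cpos // Dp_last.
    have [z zs h1] := above (treal hk) sr hneg.
    by exists z; rewrite smu' // h1.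
  - move=> k z z' hk /andP[_ h1] /andP[h2 _].
    by apply: lt_trans h2; move: h1; rewrite hk.
have neg : a < 0 -> size mu = r /\ forall k, (k < r)%N ->
    (mu`_k < t k) && ((0 < k)%N ==> (t k.-1 < mu`_k)).
  move=> an.
  apply: (seq_from_witness (P := fun k z => (z < t k) && ((0 < k)%N ==> (t k.-1 < z)))).
  - exact: smu.
  - exact: size_mu_le.
  - move=> k hk; case: k hk => [|k] hk.
      have hneg : \prod_(z <- s) (z - t 0%N) < 0.
        rewrite prod_flip -hG hs (hGt (Ordinal hk)) /=.
        have -> : (-1) ^+ r * (- a * c 0%N * Dp (Ordinal hk)) =
            (- a * c 0%N) * ((-1) ^+ r * Dp (Ordinal hk)) by ring.
        rewrite pmulr_rlt0; first exact: Dp_first.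
        by rewrite mulr_gt0 ?cpos // oppr_gt0.
      have [z zs h1] := below (treal hk) sr hneg.
      by exists z; rewrite smu' // h1.
    have hk0 : (k < r)%N by apply: ltnW.
    have hneg : (\prod_(z <- s) (t k - z)) * (\prod_(z <- s) (t k.+1 - z)) < 0.
      rewrite -!hG (hGt (Ordinal hk0)) (hGt (Ordinal hk)) /=.
      have -> : - a * c k * Dp (Ordinal hk0) * (- a * c k.+1 * Dp (Ordinal hk)) =
          (a * a * c k * c k.+1) * (Dp (Ordinal hk0) * Dp (Ordinal hk)) by ring.
      rewrite pmulr_rlt0; first exact: Dp_next.
      have aa : 0 < a * a by rewrite nmulr_rgt0.
      by apply: mulr_gt0; [apply: mulr_gt0 => //|]; apply: cpos.
    have [z zs /andP[h1 h2]] :=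
      between (treal hk0) (treal hk) sr (tlt st hk0 hk (ltnSn k)) hneg.
    by exists z; rewrite smu' // h2 h1.
  - move=> k z z' hk /andP[h1 _] /andP[_ h2].
    by apply: lt_trans h1 _; move: h2.
have hsize : size mu = r.
  case/orP: (real_cases (real0 _) ar) => h.
    have : a < 0 by rewrite lt_neqAle a0 h.
    by case/neg.
  by case/pos: h.
split => //.
- move=> x xn.
  have e : \prod_(z <- mu) (z - x) = \prod_(i < size mu) (mu`_i - x).
    by rewrite (big_nth 0) big_mkord.
  rewrite hsize in e; rewrite -e prod_flip hsize.
  have -> : \prod_(z <- mu) (x - z) = G.[x].
    by rewrite (G_mu hsize) horner_prod; apply: eq_bigr => z _; rewrite hornerXsubC.
  rewrite Gp_out // -(prod_ord tau (fun z => z - x)) prod_flip prod_ord mulrA.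
  by [].
- move=> ap i hi; have [_ h] := pos ap.
  have /andP[h1 h2] := h i hi; split => // hi1; move: h2; rewrite hi1.
  by [].
- move=> an i hi; have [_ h] := neg an.
  have /andP[h1 _] := h i hi; split => // hi1.
  by have /andP[_ h2] := h i.+1 hi1; move: h2.
Qed.

End Combi.

Theorem theorem2p2 (n : nat) (H : 'M[algC]_n) (a : algC) (tau mu : seq algC) :
  herm_mx H -> a \is Num.real ->
  sorted <%R tau -> (forall x, (x \in tau) = main_eig H x) ->
  sorted <%R mu -> (forall x, (x \in mu) = main_eig (H + a *: Jmx n) x) ->
  [/\ size mu = size tau,
      (forall x : algC, x \notin tau ->
         \prod_(i < size tau) (mu`_i - x) =
         \prod_(i < size tau) (tau`_i - x) *
           (1 + a * \sum_(j < size tau)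
                      n%:R * main_angle H tau`_j ^+ 2 / (tau`_j - x))),
      (0 < a -> forall i : nat, (i < size tau)%N ->
         tau`_i < mu`_i /\ ((i.+1 < size tau)%N -> mu`_i < tau`_i.+1)) &
      (a < 0 -> forall i : nat, (i < size tau)%N ->
         mu`_i < tau`_i /\ ((i.+1 < size tau)%N -> tau`_i < mu`_i.+1))].
Proof.
move=> /eqP hH ar stau htau smu hmu.
have utau : uniq tau := lt_sorted_uniq stau.
case: (eqVneq a 0) => [a0 | a0].
  rewrite a0 in hmu *.
  have e : mu = tau.
    apply: lt_sorted_eq => // x; rewrite hmu htau scale0r addr0.
    by [].
  rewrite e; split => //.
  - by move=> x _; rewrite mul0r addr0 mulr1.
  - by rewrite ltxx.
  - by rewrite ltxx.
have hM : ctr (H + a *: Jmx n) = H + a *: Jmx n.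
  rewrite ctrD ctrZ hH; congr (_ + _ *: _).
    by move: ar; rewrite CrealE => /eqP.
  by apply/matrixP => i k; rewrite !mxE rmorph1.
apply: (combi_main (c := fun j => n%:R * main_angle H tau`_j ^+ 2)) => //.
- by move=> i hi; have [] := w_facts hH htau hi.
- move=> i hi; rewrite main_angle2 lt_def dot_ge0 andbT cw_eq0.
  by have [] := w_facts hH htau hi.
- move=> x; rewrite hmu main_eigE => wn0.
  apply: (herm_eig_real hM _ wn0).
  by rewrite mulmxA eigprojA scalemxAl.
- move=> x; rewrite hmu (mu_char hH a0 utau htau).
  congr (_ && (1 + a * _ == 0)); apply: eq_bigr => i _.
  by rewrite main_angle2.
Qed.
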